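(* For every binary matrix $A$, the base graph of $A$ is acyclic, both with respect to the binary setting and with respect to the boolean setting.
   Context: A set $X$ of $\{0,1\}$-vectors spans a vector $y$ in the binary (resp. boolean) sense if $y=\sum_{x\in X}c_xx$ with $c_x\in\{0,1\}$ using ordinary (resp. boolean, $1+1=1$) addition; $X$ spans a set $Y$ if it spans each vector of $Y$. A binary (resp. boolean) base of an $n\times m$ binary matrix $A$ is a set of $\{0,1\}$ column vectors of length $n$ spanning every column of $A$ in the corresponding sense, of minimum cardinality among such spanning sets. The base graph of $A$ (in the given setting) is the directed graph whose vertices are the bases of $A$, with a directed edge from a base $U$ to a different base $V$ whenever $U$ spans $V$. *)

(* Defs.v *)
From mathcomp Require Import all_boot all_algebra.
Set Implicit Arguments. Unset Strict Implicit. Unset Printing Implicit Defensive.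

(* {0,1}-vectors of length n are boolean-valued functions on 'I_n
   (true = 1, false = 0). *)
Definition vec (n : nat) := {ffun 'I_n -> bool}.

Inductive setting := Binary | Boolean.

(* X spans y: y = sum_{x in X} c_x x with c_x in {0,1}, using ordinary
   (integer) addition (Binary) or boolean addition 1+1=1 (Boolean). *)
Definition spans_vec (s : setting) (n : nat) (X : {set vec n}) (y : vec n) : Prop :=
  exists c : vec n -> bool,
    match s with
    | Binary => forall i : 'I_n, (y i : nat) = (\sum_(x in X) (c x : nat) * (x i : nat))%N
    | Boolean => forall i : 'I_n, y i = [exists x in X, c x && x i]
    end.

Definition spans_set (s : setting) (n : nat) (X Y : {set vec n}) : Prop :=
  forall y, y \in Y -> spans_vec s X y.

Definition column (n m : nat) (A : 'M[bool]_(n, m)) (j : 'I_m) : vec n :=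
  [ffun i => A i j].

Definition spans_matrix (s : setting) (n m : nat) (A : 'M[bool]_(n, m))
  (X : {set vec n}) : Prop :=
  forall j : 'I_m, spans_vec s X (column A j).

Definition is_base (s : setting) (n m : nat) (A : 'M[bool]_(n, m))
  (U : {set vec n}) : Prop :=
  spans_matrix s A U /\
  forall V : {set vec n}, spans_matrix s A V -> #|U| <= #|V|.

Definition base_edge (s : setting) (n m : nat) (A : 'M[bool]_(n, m))
  (U V : {set vec n}) : Prop :=
  is_base s A U /\ is_base s A V /\ U <> V /\ spans_set s U V.

(* directed walk U = W_0 -> W_1 -> ... -> W_k with W_1..W_k listed in p *)
Fixpoint walk (T : Type) (e : T -> T -> Prop) (x : T) (p : seq T) : Prop :=
  match p with
  | [::] => True
  | y :: p' => e x y /\ walk e y p'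
  end.

Definition acyclic (T : Type) (e : T -> T -> Prop) : Prop :=
  forall (x : T) (p : seq T), walk e x p -> last x p = x -> p = [::].

(* Main.v *)
Require Import Defs.
From mathcomp Require Import all_boot all_algebra.
From Stdlib Require Import ClassicalEpsilon.
Set Implicit Arguments. Unset Strict Implicit. Unset Printing Implicit Defensive.

Section S.
Variable n : nat.
Implicit Types (X Y : {set vec n}) (x y z : vec n).

Definition leV x y := [forall i, x i ==> y i].

Lemma leV_anti x y : leV x y -> leV y x -> x = y.
Proof.
move=> /forallP h1 /forallP h2; apply/ffunP=> i.
by have := h1 i; have := h2 i; case: (x i); case: (y i).
Qed.

Lemma term_le X (F : vec n -> nat) x : x \in X -> F x <= \sum_(z in X) F z.
Proof. by move=> hx; rewrite (bigD1 x) //= leq_addr. Qed.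

Lemma span_restrict s X X' y : spans_vec s X y ->
  (forall x, x \in X -> leV x y -> x \in X') -> spans_vec s X' y.
Proof.
case: s => -[c hc] hX /=.
- have le : forall x, x \in X -> c x -> leV x y.
    move=> x xX cx; apply/forallP=> i; apply/implyP=> xi.
    have := term_le (fun x => (c x : nat) * (x i : nat)) xX; rewrite -hc cx xi /=.
    by case: (y i).
  exists (fun x => c x && (x \in X)) => i; rewrite hc.
  rewrite big_mkcond [RHS]big_mkcond /=.
  apply: eq_bigr => x _.
  case xX: (x \in X); case cx: (c x); rewrite /= ?mul0n ?andbF;
    try by case: (x \in X').
  by rewrite (hX x xX (le x xX cx)).
- have le : forall x, x \in X -> c x -> leV x y.
    move=> x xX cx; apply/forallP=> i; apply/implyP=> xi.
    by rewrite hc; apply/existsP; exists x; rewrite xX cx xi.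
  exists (fun x => c x && (x \in X)) => i; rewrite hc.
  apply/existsP/existsP => -[x /andP [xX /andP [cx xi]]].
  + by exists x; rewrite (hX x xX (le x xX cx)) cx xX xi.
  + by move: cx => /andP [cx xX']; exists x; rewrite xX' cx xi.
Qed.

Lemma span_self s X x : x \in X -> spans_vec s X x.
Proof.
move=> xX; exists (fun z => z == x); case: s => i.
- rewrite (bigD1 x) //= eqxx mul1n big1 ?addn0 // => z /andP [_ /negbTE ->].
  by rewrite mul0n.
- apply/idP/existsP => [xi|[z /andP [_ /andP [/eqP -> ]]]] //.
  by exists x; rewrite xX eqxx xi.
Qed.

Lemma span_trans s X Y z : spans_set s X Y -> spans_vec s Y z -> spans_vec s X z.
Proof.
case: s => hXY [c hc].
- have hd : forall y, exists d : vec n -> bool, y \in Y ->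
      forall i, (y i : nat) = (\sum_(x in X) (d x : nat) * (x i : nat))%N.
    move=> y; case yY: (y \in Y); last by exists (fun _ => false).
    by have [d hd] := hXY y yY; exists d.
  pose d y := proj1_sig (constructive_indefinite_description _ (hd y)).
  have dP y : y \in Y -> forall i, (y i : nat) = (\sum_(x in X) (d y x : nat) * (x i : nat))%N
    := proj2_sig (constructive_indefinite_description _ (hd y)).
  pose N x := (\sum_(y in Y) (c y : nat) * (d y x : nat))%N.
  exists (fun x => 0 < N x) => i.
  have E : (z i : nat) = (\sum_(x in X) N x * (x i : nat))%N.
    rewrite hc.
    transitivity (\sum_(y in Y) \sum_(x in X) (c y : nat) * (d y x : nat) * (x i : nat))%N.
      apply: eq_bigr => y yY; rewrite (dP y yY i) big_distrr /=.
      by apply: eq_bigr => x _; rewrite mulnA.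
    by rewrite exchange_big /=; apply: eq_bigr => x _; rewrite big_distrl.
  rewrite E; apply: eq_bigr => x xX.
  have := term_le (fun x => N x * (x i : nat)) xX; rewrite /= -E => h.
  have h1 : N x * (x i : nat) <= 1 by apply: leq_trans h _; case: (z i).
  move: h1; case: (x i); rewrite ?muln0 ?muln1 //.
  by case: (N x) => [|[|k]].
- have hd : forall y, exists d : vec n -> bool, y \in Y ->
      forall i, y i = [exists x in X, d x && x i].
    move=> y; case yY: (y \in Y); last by exists (fun _ => false).
    by have [d hd] := hXY y yY; exists d.
  pose d y := proj1_sig (constructive_indefinite_description _ (hd y)).
  have dP y : y \in Y -> forall i, y i = [exists x in X, d y x && x i]
    := proj2_sig (constructive_indefinite_description _ (hd y)).
  exists (fun x => [exists y in Y, c y && d y x]) => i; rewrite hc.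
  apply/existsP/existsP.
  + move=> [y /andP [yY /andP [cy yi]]].
    rewrite (dP y yY i) in yi; case/existsP: yi => x /andP [xX /andP [dx xi]].
    exists x; rewrite xX xi andbT; apply/existsP; exists y; by rewrite yY cy dx.
  + move=> [x /andP [xX /andP [/existsP [y /andP [yY /andP [cy dx]]] xi]]].
    exists y; rewrite yY cy /= (dP y yY i); apply/existsP; exists x.
    by rewrite xX dx xi.
Qed.

Lemma set_trans s X Y Z : spans_set s X Y -> spans_set s Y Z -> spans_set s X Z.
Proof. by move=> h1 h2 z zZ; apply: span_trans h1 (h2 z zZ). Qed.

Lemma set_refl s X : spans_set s X X.
Proof. by move=> x xX; apply: span_self. Qed.

Lemma base_sub s m (A : 'M[bool]_(n, m)) U V : is_base s A U ->
  spans_set s U V -> spans_set s V U -> U \subset V.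
Proof.
move=> [hUA hUmin] hUV hVU; apply/subsetP => u uU; apply/negPn/negP => uV.
pose W := U :\ u.
have hWu : spans_vec s W u.
  pose V' := [set v in V | leV v u].
  apply: (@span_trans s W V').
  - move=> v; rewrite inE => /andP [vV vu].
    apply: (span_restrict (hUV v vV)) => x xU xv.
    rewrite !inE xU andbT; apply/negP => /eqP xu; subst x.
    by move: uV; rewrite -(leV_anti vu xv) vV.
  - by apply: (span_restrict (hVU u uU)) => v vV vu; rewrite inE vV vu.
have hWU : spans_set s W U.
  move=> x xU; case: (eqVneq x u) => [-> //|xu]; apply: span_self.
  by rewrite !inE xu xU.
have := hUmin W (fun j => span_trans hWU (hUA j)).
by rewrite /W (cardsD1 u U) uU add1n ltnn.
Qed.

Lemma base_eq s m (A : 'M[bool]_(n, m)) U V : is_base s A U -> is_base s A V ->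
  spans_set s U V -> spans_set s V U -> U = V.
Proof.
move=> bU bV hUV hVU; apply/eqP; rewrite eqEcard (base_sub bU hUV hVU) /=.
exact: bV.2 _ bU.1.
Qed.

Lemma walk_span s m (A : 'M[bool]_(n, m)) p (U : {set vec n}) :
  walk (base_edge s A) U p -> spans_set s U (last U p).
Proof.
elim: p U => [|Z p IH] U /=; first by move=> _; apply: set_refl.
by move=> [[_ [_ [_ h]]] w]; apply: set_trans h (IH Z w).
Qed.

Lemma acyc s m (A : 'M[bool]_(n, m)) : acyclic (base_edge s A).
Proof.
move=> U [|U' p] //= [[bx [b_y [nxy hxy]]] w] hl.
have := walk_span w; rewrite hl => hyx.
by case: nxy; apply: base_eq bx b_y hxy hyx.
Qed.

End S.

Theorem mainTheorem16 :
  forall (n m : nat) (A : 'M[bool]_(n, m)),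
    acyclic (base_edge Binary A) /\ acyclic (base_edge Boolean A).
Proof. by move=> n m A; split; apply: acyc. Qed.
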